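(* Let $m\ge1$ and $y\in\mathbb{R}^{2m+1}_+$. Then $$\min_{x\in\mathbb{R}^{m+1}_+}\mathcal{I}(y\|x*x)=\min_{\mathbf{Y}\in\boldsymbol{\mathcal{Y}},\,\mathbf{W}\in\boldsymbol{\mathcal{W}}}\mathcal{I}(\mathbf{Y}\|\mathbf{W}).$$
   Context: For $x\in\mathbb{R}^{m+1}$ set $x_k=0$ for $k<0$, $k>m$, and $(x*x)_i=\sum_{j=0}^i x_{i-j}x_j$, $i=0,\dots,2m$. Matrices are indexed by rows $i=0,\dots,2m$ and columns $j=0,\dots,m$. $\boldsymbol{\mathcal{Y}}$ is the set of $\mathbf{Y}\in\mathbb{R}^{(2m+1)\times(m+1)}_+$ with $\mathbf{Y}_{ij}=0$ for $i<j$ and $i>j+m$ and with row sums $\sum_j\mathbf{Y}_{ij}=y_i$. $\boldsymbol{\mathcal{W}}$ is the set of matrices with $\mathbf{W}_{ij}=x_{i-j}x_j$ for $0\le j\le m$, $j\le i\le j+m$, and $\mathbf{W}_{ij}=0$ otherwise, for some $x\in\mathbb{R}^{m+1}_+$. For nonnegative arrays $M,N$ of the same size, $\mathcal{I}(M\|N)=\sum\big(M\log\frac{M}{N}-M+N\big)$ entrywise summed (convention $0\log0=0$; $+\infty$ if some entry has $M>0=N$). *)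

(* Defs.v *)
From HB Require Import structures.
From mathcomp Require Import all_boot all_order all_algebra.
From mathcomp Require Import all_classical all_reals exp.
From mathcomp Require Import ereal.
Set Implicit Arguments. Unset Strict Implicit. Unset Printing Implicit Defensive.
Import Order.TTheory GRing.Theory Num.Theory.
Local Open Scope ring_scope.

Section Defs.
Variable R : realType.

Definition xext (m : nat) (x : 'I_m.+1 -> R) (k : nat) : R :=
  if (k < m.+1)%N then x (inord k) else 0.

Definition selfconv (m : nat) (x : 'I_m.+1 -> R) (i : 'I_(2 * m).+1) : R :=
  \sum_(j < i.+1) xext x (i - j) * xext x j.

(* one entry of I(M||N): M log(M/N) - M + N, with 0 log 0 = 0,
   and +oo if M > 0 = N (entries assumed nonnegative) *)
Definition idiv_term (a b : R) : \bar R :=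
  if a == 0 then b%:E
  else if b == 0 then +oo%E
  else (a * ln (a / b) - a + b)%:E.

Definition idiv_vec (n : nat) (M N : 'I_n -> R) : \bar R :=
  (\sum_(i < n) idiv_term (M i) (N i))%E.

Definition idiv_mx (p q : nat) (M N : 'M[R]_(p, q)) : \bar R :=
  (\sum_(i < p) \sum_(j < q) idiv_term (M i j) (N i j))%E.

Definition in_calY (m : nat) (y : 'I_(2 * m).+1 -> R)
  (Y : 'M[R]_((2 * m).+1, m.+1)) : Prop :=
  (forall i j, 0 <= Y i j) /\
  (forall (i : 'I_(2 * m).+1) (j : 'I_m.+1),
      ((i < j)%N \/ (j + m < i)%N) -> Y i j = 0) /\
  (forall i, \sum_(j < m.+1) Y i j = y i).

Definition in_calW (m : nat) (W : 'M[R]_((2 * m).+1, m.+1)) : Prop :=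
  exists x : 'I_m.+1 -> R, (forall k, 0 <= x k) /\
    forall (i : 'I_(2 * m).+1) (j : 'I_m.+1),
      W i j = if ((j <= i) && (i <= j + m))%N
              then xext x (i - j) * x j else 0.
End Defs.

(* Main.v *)
Require Import Defs.
From HB Require Import structures.
From mathcomp Require Import all_boot all_order all_algebra.
From mathcomp Require Import all_classical all_reals exp.
From mathcomp Require Import ereal.
From mathcomp Require Import all_analysis.
From mathcomp Require Import ring lra.
Import Order.TTheory GRing.Theory Num.Theory.
Import numFieldTopology.Exports numFieldNormedType.Exports.
Local Open Scope ring_scope.
From mathcomp Require Import zify.
Set Implicit Arguments. Unset Strict Implicit.
Section Ineq.
Variable R : realType.

Lemma ln_le_sub1 (u : R) : 0 < u -> ln u <= u - 1.
Proof.
move=> u0; have h := @le_ln1Dx R (u - 1).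
have e : 1 + (u - 1) = u by rewrite addrC subrK.
by rewrite e in h; apply: h; lra.
Qed.

Lemma key (Y W c : R) : 0 < c -> 0 <= Y -> 0 <= W ->
  ((Y * ln c - W * c + W)%:E <= idiv_term Y W)%E.
Proof.
move=> c0 Y0 W0; rewrite /idiv_term.
case: eqP => [->|/eqP Yn0].
  rewrite mul0r sub0r lee_fin; have := mulr_ge0 W0 (ltW c0); lra.
case: eqP => [->|/eqP Wn0]; first by rewrite leey.
rewrite lee_fin.
have Yp : 0 < Y by rewrite lt_def Yn0.
have Wp : 0 < W by rewrite lt_def Wn0.
set v := W * c / Y.
have vp : 0 < v by rewrite /v divr_gt0 // mulr_gt0.
have hv : Y / W = c / v by rewrite /v; field; apply/andP; split; rewrite gt_eqF.
have Yv : Y * v = W * c by rewrite /v; field; rewrite gt_eqF.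
rewrite hv ln_div ?posrE //.
have hl := @ln_le_sub1 v vp.
have h2 : 0 <= Y * (v - 1 - ln v) by apply: mulr_ge0; lra.
nra.
Qed.


Lemma term_ge0 (a b : R) : 0 <= a -> 0 <= b -> (0 <= idiv_term a b)%E.
Proof.
move=> a0 b0; apply: (le_trans _ (@key a b 1 ltr01 a0 b0)).
by rewrite ln1 mulr0 mulr1 sub0r addNr.
Qed.

Lemma sum_keyexpr (p : nat) (a b : R) (Yr Wr : 'I_p -> R) :
  a != 0 -> b != 0 -> \sum_j Yr j = a -> \sum_j Wr j = b ->
  (\sum_(j < p) (Yr j * ln (a / b) - Wr j * (a / b) + Wr j)%:E)%E = idiv_term a b.
Proof.
move=> a0 b0 hY hW; rewrite sumEFin /idiv_term (negbTE a0) (negbTE b0).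
congr (_%:E).
rewrite big_split /= big_split /= -mulr_suml sumrN -mulr_suml hY hW.
by congr (_ + _); congr (_ - _); field.
Qed.

Lemma row_lb (p : nat) (a b : R) (Yr Wr : 'I_p -> R) :
  (forall j, 0 <= Yr j) -> (forall j, 0 <= Wr j) ->
  \sum_j Yr j = a -> \sum_j Wr j = b ->
  (idiv_term a b <= \sum_(j < p) idiv_term (Yr j) (Wr j))%E.
Proof.
move=> Y0 W0 hY hW.
have a0 : 0 <= a by rewrite -hY; apply: sumr_ge0.
have b0 : 0 <= b by rewrite -hW; apply: sumr_ge0.
have [ae|an] := eqVneq a 0.
  have Yz : forall j, Yr j = 0.
    by move=> j; apply: (psumr_eq0P (P := xpredT) (fun i _ => Y0 i)) => //; rewrite hY ae.
  rewrite ae /idiv_term eqxx.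
  under eq_bigr do rewrite Yz eqxx.
  by rewrite sumEFin hW.
have [be|bn] := eqVneq b 0.
  have Wz : forall j, Wr j = 0.
    by move=> j; apply: (psumr_eq0P (P := xpredT) (fun i _ => W0 i)) => //; rewrite hW be.
  have [j hj] : exists j, Yr j != 0.
    case: (pselect (exists j, Yr j != 0)) => // nj; exfalso.
    have : a = 0.
      rewrite -hY big1 // => j _; apply/eqP/negPn/negP => h; apply: nj; exists j; exact h.
    by move/eqP; rewrite (negbTE an).
  have ht : idiv_term (Yr j) (Wr j) = +oo%E by rewrite /idiv_term (negbTE hj) Wz eqxx.
  rewrite (bigD1 j) //= ht addye ?leey //.
  have : (0 <= \sum_(i < p | i != j) idiv_term (Yr i) (Wr i))%E.
    by apply: sume_ge0 => i _; apply: term_ge0.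
  by case: (\sum_(i < p | i != j) idiv_term (Yr i) (Wr i))%E.
have bp : 0 < b by rewrite lt_def bn.
have ap : 0 < a by rewrite lt_def an.
rewrite -(sum_keyexpr an bn hY hW).
apply: lee_sum => j _; apply: key => //; exact: divr_gt0.
Qed.

Lemma row_eq (p : nat) (a b : R) (Wr : 'I_p -> R) :
  0 <= a -> (forall j, 0 <= Wr j) -> \sum_j Wr j = b -> (a != 0 -> b != 0) ->
  (\sum_(j < p) idiv_term (if b == 0%R then 0%R else (a * Wr j / b)%R) (Wr j))%E = idiv_term a b.
Proof.
move=> a0 W0 hW hab.
have b0 : 0 <= b by rewrite -hW; apply: sumr_ge0.
have [ae|an] := eqVneq a 0.
  rewrite ae /idiv_term eqxx.
  under eq_bigr do rewrite mul0r mul0r if_same eqxx.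
  by rewrite sumEFin hW.
have bn := hab an.
have bp : 0 < b by rewrite lt_def bn.
have ap : 0 < a by rewrite lt_def an.
rewrite (negbTE bn).
have hY : \sum_j (a * Wr j / b) = a.
  by rewrite -mulr_suml -mulr_sumr hW; field.
rewrite -(sum_keyexpr an bn hY hW).
apply: eq_bigr => j _.
rewrite /idiv_term.
have [we|wn] := eqVneq (Wr j) 0.
  rewrite we !mulr0 mul0r eqxx; congr (_%:E); ring.
have wp : 0 < Wr j by rewrite lt_def wn W0.
have yn : a * Wr j / b != 0 by rewrite gt_eqF // divr_gt0 // mulr_gt0.
rewrite (negbTE yn); congr (_%:E).
have -> : a * Wr j / b / Wr j = a / b by field; apply/andP; split.
ring.
Qed.


Lemma term_big (a b M : R) : 0 <= a -> 0 <= M -> 2 * (M + a) + 1 < b ->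
  (M%:E < idiv_term a b)%E.
Proof.
move=> a0 M0 hb.
have b0 : 0 <= b by lra.
have c0 : (0 : R) < 2^-1 by rewrite invr_gt0; lra.
apply: (lt_le_trans _ (@key a b 2^-1 c0 a0 b0)).
rewrite lte_fin lnV ?posrE; last lra.
have l2 : ln (2 : R) <= 1.
  have := @ln_le_sub1 2 (ltr0Sn R 1); lra.
have h : a * ln 2 <= a * 1 by apply: ler_wpM2l.
lra.
Qed.

Lemma term_small (a b M : R) : 0 < a -> 0 <= M -> 0 <= b ->
  b < a / expR (M / a + 2) -> (M%:E < idiv_term a b)%E.
Proof.
move=> ap M0 b0 hb.
rewrite /idiv_term (gt_eqF ap).
case: eqP => [_|/eqP bn]; first by rewrite ltey.
have bp : 0 < b by rewrite lt_def bn b0.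
rewrite lte_fin.
set E := expR (M / a + 2).
have Ep : 0 < E by apply: expR_gt0.
have h1 : b * E < a by rewrite -ltr_pdivlMr.
have h2 : E < a / b by rewrite ltr_pdivlMr // mulrC.
have h3 : ln E < ln (a / b) by rewrite ltr_ln ?posrE // divr_gt0.
rewrite /E expRK in h3.
have h4 : a * (M / a + 2) < a * ln (a / b) by rewrite ltr_pM2l.
have h5 : a * (M / a + 2) = M + 2 * a by field; rewrite gt_eqF.
lra.
Qed.

End Ineq.
Section Conv.
Variable R : realType.
Variable m : nat.

Lemma sum_ge_term (p : nat) (F : 'I_p -> R) j : (forall i, 0 <= F i) -> F j <= \sum_i F i.
Proof.
move=> F0; rewrite (bigD1 j) //= lerDl; apply: sumr_ge0 => i _; exact: F0.
Qed.

Lemma xext_out (x : 'I_m.+1 -> R) k : (m < k)%N -> xext x k = 0.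
Proof. by move=> h; rewrite /xext ltnNge h. Qed.

Lemma xext_ord (x : 'I_m.+1 -> R) (j : 'I_m.+1) : xext x j = x j.
Proof. by rewrite /xext ltn_ord inord_val. Qed.

Lemma xext_ge0 (x : 'I_m.+1 -> R) : (forall k, 0 <= x k) -> forall k, 0 <= xext x k.
Proof. by move=> h k; rewrite /xext; case: ifP. Qed.

Lemma selfconv_ge0 (x : 'I_m.+1 -> R) : (forall k, 0 <= x k) -> forall i, 0 <= selfconv x i.
Proof.
move=> h i; apply: sumr_ge0 => j _; apply: mulr_ge0; exact: xext_ge0.
Qed.

Lemma band_sum (x : 'I_m.+1 -> R) (i : 'I_(2 * m).+1) :
  \sum_(j < m.+1) (if ((j <= i) && (i <= j + m))%N then xext x (i - j) * x j else 0)
  = selfconv x i.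
Proof.
rewrite /selfconv.
set e := fun j : nat => xext x (i - j) * xext x j.
have -> : \sum_(j < m.+1) (if ((j <= i) && (i <= j + m))%N then xext x (i - j) * x j else 0)
   = \sum_(j < m.+1) (if (j <= i)%N then e j else 0).
  apply: eq_bigr => j _; rewrite /e xext_ord.
  case: (leqP j i) => //= hji; case: (leqP i (j + m)) => //= hij.
  rewrite xext_out ?mul0r //; lia.
rewrite (big_ord_widen (i + m).+1 (fun j => if (j <= i)%N then e j else 0)); last lia.
rewrite (big_ord_widen (i + m).+1 e); last lia.
rewrite big_mkcond [RHS]big_mkcond /=.
apply: eq_bigr => j _.
case: (ltnP j m.+1) => hjm; case: (leqP j i) => hji //=.
- by rewrite ifT //; lia.
- by rewrite ifF //; lia.
- by rewrite ifT // /e (@xext_out x j) ?mulr0 //; lia.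
- by rewrite ifF //; lia.
Qed.

Lemma selfconv_sq (x : 'I_m.+1 -> R) (k : 'I_m.+1) : (forall k, 0 <= x k) ->
  x k * x k <= selfconv x (inord (2 * k)).
Proof.
move=> h.
have hk2 : (2 * k < (2 * m).+1)%N by have := ltn_ord k; lia.
rewrite /selfconv inordK //.
have hk : (k < (2 * k).+1)%N by lia.
apply: le_trans (sum_ge_term (Ordinal hk) _) => /=.
  have -> : (2 * k - k = k)%N by lia.
  by rewrite xext_ord.
by move=> j; apply: mulr_ge0; apply: xext_ge0.
Qed.

Lemma selfconv_one (i : 'I_(2 * m).+1) : 1 <= selfconv (fun _ : 'I_m.+1 => 1 : R) i.
Proof.
have hi := ltn_ord i.
have hj : (i - m < i.+1)%N by lia.
rewrite /selfconv.
apply: le_trans (sum_ge_term (Ordinal hj) _) => /=.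
  rewrite /xext ifT; last lia.
  by rewrite ifT ?mulr1 //; lia.
by move=> j; apply: mulr_ge0; apply: xext_ge0.
Qed.

End Conv.
Section Topo.
Variable R : realType.
Variable m : nat.
Local Notation PT := {ptws 'I_m.+1 -> R}.

Lemma sum_cont (T : topologicalType) (p : nat) (f : 'I_p -> T -> R) (x : T) :
  (forall i, {for x, continuous (f i)}) ->
  {for x, continuous (fun t => \sum_(i < p) f i t)}.
Proof.
elim: p f => [|p IH] f hf.
  have -> : (fun t => \sum_(i < 0) f i t) = (fun=> 0) by apply/funext => t; rewrite big_ord0.
  exact: cvg_cst.
have -> : (fun t => \sum_(i < p.+1) f i t) = (fun t => \sum_(i < p) f (widen_ord (leqnSn p) i) t + f ord_max t).
  by apply/funext => t; rewrite big_ord_recr.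
apply: continuousD; [exact: (IH (fun i => f (widen_ord (leqnSn p) i))) | exact: hf].
Qed.

Lemma proj_cont (k : 'I_m.+1) : continuous (fun x : PT => x k).
Proof. move=> x. exact: (@proj_continuous _ (fun _ : 'I_m.+1 => R) k x). Qed.

Lemma xext_cont (k : nat) : continuous (fun x : PT => xext x k).
Proof.
case h : (k < m.+1)%N; rewrite /xext h.
  exact: proj_cont.
exact: cst_continuous.
Qed.

Lemma selfconv_cont (i : 'I_(2 * m).+1) : continuous (fun x : PT => selfconv x i).
Proof.
move=> x; rewrite /selfconv.
apply: (@sum_cont PT i.+1 (fun j (t : PT) => xext t (i - j) * xext t j) x) => j.
apply: continuousM; exact: xext_cont.
Qed.

Definition Gf (a b : R) := if a == 0 then b else a * ln (a / b) - a + b.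

Lemma Gf_cont (T : topologicalType) (a : R) (z : T -> R) (x : T) : {for x, continuous z} ->
  (a != 0 -> 0 < z x) -> 0 <= a -> {for x, continuous (fun t => Gf a (z t))}.
Proof.
move=> hz hpos a0; rewrite /Gf; case: eqP => [_|/eqP an]; first exact: hz.
have zp := hpos an.
have ap : 0 < a by rewrite lt_def an a0.
have hc : {for x, continuous (fun=> a)} by apply: cvg_cst.
have h0 : {for x, continuous (fun t => (z t)^-1)}.
  by apply: continuousV; [rewrite gt_eqF | exact: hz].
have h1 : {for x, continuous (fun t => a / z t)}.
  exact: (@continuousM _ _ (fun=> a) (fun t => (z t)^-1) x hc h0).
have h2 : {for x, continuous (fun t => ln (a / z t))}.
  apply: (continuous_comp h1); apply: continuous_ln; exact: divr_gt0.
have h3 : {for x, continuous (fun t => a * ln (a / z t))}.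
  exact: (@continuousM _ _ (fun=> a) _ x hc h2).
have h4 : {for x, continuous (fun t => a * ln (a / z t) - a)}.
  exact: (@continuousB _ _ _ _ (fun=> a) x h3 hc).
exact: (@continuousD _ _ _ _ z x h4 hz).
Qed.

End Topo.

Section Exist.
Variable R : realType.
Variable m : nat.
Variable y : 'I_(2 * m).+1 -> R.
Hypothesis hy : forall i, 0 <= y i.
Local Notation PT := {ptws 'I_m.+1 -> R}.
Local Open Scope classical_set_scope.

Definition Fv (x : 'I_m.+1 -> R) := \sum_i Gf (y i) (selfconv x i).

Lemma idiv_F (x : 'I_m.+1 -> R) : (forall i, y i != 0 -> selfconv x i != 0) ->
  idiv_vec y (selfconv x) = (Fv x)%:E.
Proof.
move=> h; rewrite /idiv_vec /Fv -sumEFin; apply: eq_bigr => i _.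
rewrite /idiv_term /Gf; case: eqP => // /eqP yn.
by rewrite (negbTE (h i yn)).
Qed.

Lemma idiv_ge0 (x : 'I_m.+1 -> R) : (forall k, 0 <= x k) -> (0 <= idiv_vec y (selfconv x))%E.
Proof.
move=> h; apply: sume_ge0 => i _; apply: term_ge0 => //; exact: selfconv_ge0.
Qed.

Lemma esum_ge_term (p : nat) (F : 'I_p -> \bar R) j : (forall i, 0 <= F i)%E ->
  (F j <= \sum_i F i)%E.
Proof.
move=> F0; rewrite (bigD1 j) //=; apply: leeDl; apply: sume_ge0 => i _; exact: F0.
Qed.

Definition x0 : 'I_m.+1 -> R := fun _ => 1.
Definition M0 := Fv x0.

Lemma idiv_x0 : idiv_vec y (selfconv x0) = M0%:E.
Proof.
apply: idiv_F => i _; rewrite gt_eqF //; apply: (lt_le_trans ltr01); exact: selfconv_one.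
Qed.

Lemma M0_ge0 : 0 <= M0.
Proof. by rewrite -lee_fin -idiv_x0; apply: idiv_ge0 => k; rewrite /x0. Qed.

Definition Kb (k : 'I_m.+1) := 2 * (M0 + y (inord (2 * k))) + 1.
Definition dl (i : 'I_(2 * m).+1) := y i / expR (M0 / y i + 2).
Definition Sset : set PT :=
  [set x | forall k, `[0, Kb k] (x k)] `&`
  [set x | forall i, y i != 0 -> dl i <= selfconv x i].

Lemma outside (x : 'I_m.+1 -> R) : (forall k, 0 <= x k) -> ~ Sset x ->
  (M0%:E < idiv_vec y (selfconv x))%E.
Proof.
move=> xp nS.
have [[k hk]|[i hi]] : (exists k, ~ `[0, Kb k] (x k)) \/
    (exists i, ~ (y i != 0 -> dl i <= selfconv x i)).
  by case: ((not_andP _ _).1 nS) => h; [left|right]; apply/existsNP; exact h.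
- have hK : Kb k < x k.
    move: hk; rewrite /= in_itv /= xp /= => /negP; by rewrite -ltNge.
  set i2 : 'I_(2 * m).+1 := inord (2 * k).
  apply: (lt_le_trans _ (esum_ge_term i2 _)); last first.
    move=> j; apply: term_ge0 => //; exact: selfconv_ge0.
  apply: term_big => //; first exact: M0_ge0.
  have K1 : 1 <= Kb k by rewrite /Kb; have := M0_ge0; have := hy (inord (2 * k)); lra.
  have hs := selfconv_sq k xp.
  have : Kb k < x k * x k by nra.
  rewrite /Kb /i2; lra.
- move/not_implyP: hi => [yn /negP]; rewrite -ltNge => hlt.
  apply: (lt_le_trans _ (esum_ge_term i _)); last first.
    move=> j; apply: term_ge0 => //; exact: selfconv_ge0.
  apply: term_small => //.
  + by rewrite lt_def yn hy.
  + exact: M0_ge0.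
  + exact: selfconv_ge0.
Qed.

Lemma x0S : Sset x0.
Proof.
case: (pselect (Sset x0)) => // h; exfalso.
have := @outside x0 (fun k => ler01) h.
by rewrite idiv_x0 ltxx.
Qed.

Lemma S_compact : compact Sset.
Proof.
apply: compact_closedI.
  have h := @tychonoff _ (fun _ : 'I_m.+1 => R) (fun k => `[0, Kb k]%classic) (fun k => @segment_compact R 0 (Kb k)).
  exact: h.
have -> : [set x : PT | forall i, y i != 0 -> dl i <= selfconv x i] =
   \bigcap_(i in [set i | y i != 0]) ((fun x : PT => selfconv x i) @^-1` [set r | dl i <= r]).
  by apply/seteqP; split => x /= h i hi; exact: h.
apply: closed_bigI => i _.
apply: (continuous_closedP _).1; [exact: selfconv_cont | exact: closed_ge].
Qed.

Lemma dl_gt0 i : y i != 0 -> 0 < dl i.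
Proof. by move=> yn; rewrite /dl divr_gt0 ?expR_gt0 // lt_def yn hy. Qed.

Lemma F_cont : {within Sset, continuous (Fv : PT -> R)}.
Proof.
apply: continuous_in_subspaceT => x; rewrite inE => xS.
rewrite /Fv; apply: (@sum_cont R PT _ (fun i (t : PT) => Gf (y i) (selfconv t i)) x) => i.
apply: Gf_cont; [exact: selfconv_cont | | exact: hy].
move=> yn; apply: (lt_le_trans (dl_gt0 yn)); exact: xS.2 i yn.
Qed.

Lemma exists_min : exists xm : 'I_m.+1 -> R,
  (forall k, 0 <= xm k) /\ (forall i, y i != 0 -> 0 < selfconv xm i) /\
  forall x', (forall k, 0 <= x' k) ->
    (idiv_vec y (selfconv xm) <= idiv_vec y (selfconv x'))%E.
Proof.
have ne : Sset !=set0 by exists x0; exact: x0S.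
have [xm xmS hmin] := compact_EVT_min ne S_compact F_cont.
rewrite inE in xmS.
have pos : forall i, y i != 0 -> 0 < selfconv xm i.
  move=> i yn; apply: (lt_le_trans (dl_gt0 yn)); exact: xmS.2 i yn.
have eqm : idiv_vec y (selfconv xm) = (Fv xm)%:E.
  by apply: idiv_F => i yn; rewrite gt_eqF // pos.
exists xm; split.
  by move=> k; have := xmS.1 k; rewrite /= in_itv /= => /andP[].
split => // x' x'0.
case: (pselect (Sset x')) => hS.
  rewrite eqm idiv_F; last first.
    move=> i yn; rewrite gt_eqF //; apply: (lt_le_trans (dl_gt0 yn)); exact: hS.2 i yn.
  by rewrite lee_fin; apply: hmin; rewrite inE.
rewrite eqm; apply: ltW; apply: (le_lt_trans _ (outside x'0 hS)).
by rewrite lee_fin; apply: hmin; rewrite inE; exact: x0S.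
Qed.

End Exist.

Unset Implicit Arguments.

Theorem proposition3 (R : realType) (m : nat) (hm : (1 <= m)%N)
  (y : 'I_(2 * m).+1 -> R) (hy : forall i, 0 <= y i) :
  exists x : 'I_m.+1 -> R,
    (forall k, 0 <= x k) /\
    (forall x' : 'I_m.+1 -> R, (forall k, 0 <= x' k) ->
       (idiv_vec y (selfconv x) <= idiv_vec y (selfconv x'))%E) /\
    exists Y W : 'M[R]_((2 * m).+1, m.+1),
      in_calY y Y /\ in_calW W /\
      (forall Y' W' : 'M[R]_((2 * m).+1, m.+1),
         in_calY y Y' -> in_calW W' -> (idiv_mx Y W <= idiv_mx Y' W')%E) /\
      idiv_vec y (selfconv x) = idiv_mx Y W.
Proof.
have [xm [xm0 [pos hmin]]] := exists_min hy.
exists xm; split => //; split => //.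
set z := selfconv xm.
pose W : 'M[R]_((2 * m).+1, m.+1) :=
  \matrix_(i, j) (if ((j <= i) && (i <= j + m))%N then xext xm (i - j) * xm j else 0).
pose Y : 'M[R]_((2 * m).+1, m.+1) :=
  \matrix_(i, j) (if z i == 0 then 0 else y i * W i j / z i).
exists Y, W.
have W0 : forall i j, 0 <= W i j.
  move=> i j; rewrite mxE; case: ifP => // _; apply: mulr_ge0 => //; exact: xext_ge0.
have Wsum : forall i, \sum_j W i j = z i.
  by move=> i; under eq_bigr do rewrite mxE; exact: band_sum.
have hYW : idiv_mx Y W = idiv_vec y z.
  rewrite /idiv_mx /idiv_vec; apply: eq_bigr => i _.
  under eq_bigr do rewrite [Y i _]mxE.
  apply: (row_eq (hy i) (W0 i) (Wsum i)).
  by move=> yn; rewrite gt_eqF // pos.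
split.
  split.
    move=> i j; rewrite mxE; case: ifP => // _.
    apply: divr_ge0; [exact: mulr_ge0 | exact: selfconv_ge0].
  split.
    move=> i j h; rewrite mxE.
    have -> : W i j = 0 by rewrite mxE ifF //; lia.
    by rewrite mulr0 mul0r if_same.
  move=> i; under eq_bigr do rewrite mxE.
  have [ze|zn] := eqVneq (z i) 0.
    rewrite big1 //.
    case: (eqVneq (y i) 0) => // yn.
    by have := pos i yn; rewrite -/z ze ltxx.
  idtac.
  by rewrite -mulr_suml -mulr_sumr Wsum; field.
split.
  by exists xm; split => // i j; rewrite mxE.
split.
  move=> Y' W' [Y0 [_ Ysum]] [x' [x'0 hW']].
  rewrite hYW; apply: (le_trans (hmin x' x'0)).
  rewrite /idiv_vec /idiv_mx; apply: lee_sum => i _.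
  apply: row_lb => //.
  - move=> j; rewrite hW'; case: ifP => // _; apply: mulr_ge0 => //; exact: xext_ge0.
  - by under eq_bigr do rewrite hW'; exact: band_sum.
by rewrite hYW.
Qed.
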